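(* Let $F$ be a field with $\mathrm{char}\,F\ne2$ and let $B$ be a $3$-dimensional non-commutative involutive $F$-algebra. Then there is a basis $u,v$ of $\mathrm{Im}\,B$ such that $u\times v=u$ and either $(u,u)=0$ or $(u,v)=0$.
   Context: Algebras are unital, multiplication bilinear and not necessarily associative. $B$ is involutive if there is an anti-automorphism $a\mapsto\bar a$ of order dividing $2$ with $a+\bar a\in F1$ and $a\bar a\in F1$ for all $a$; such algebras are quadratic ($1,a,a^2$ linearly dependent for all $a$). For a quadratic algebra with $\mathrm{char}\,F\ne2$, $\mathrm{Im}\,B=\{u\in B\setminus F1:u^2\in F1\}\cup\{0\}$, $B=F1\oplus\mathrm{Im}\,B$, and for $u,v\in\mathrm{Im}\,B$ one writes $uv=(u,v)1+u\times v$ with $(u,v)\in F$ and $u\times v\in\mathrm{Im}\,B$; this defines a bilinear form $(\cdot,\cdot)$ and an anti-commutative product $\times$ on $\mathrm{Im}\,B$. *)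

(* Defs.v *)
From HB Require Import structures.
From mathcomp Require Import all_boot all_order all_algebra.
From Stdlib Require Import ClassicalEpsilon.
Set Implicit Arguments. Unset Strict Implicit. Unset Printing Implicit Defensive.
Import GRing.Theory.
Local Open Scope ring_scope.

Definition is_unital_algebra (F : fieldType) (B : vectType F)
    (mul : B -> B -> B) (one : B) : Prop :=
  [/\ forall (a : F) (x y z : B), mul (a *: x + y) z = a *: mul x z + mul y z,
      forall (a : F) (x y z : B), mul z (a *: x + y) = a *: mul z x + mul z y
    & forall x : B, mul one x = x /\ mul x one = x].

Definition inF1 (F : fieldType) (B : vectType F) (one x : B) : bool :=
  x \in <[one]>%VS.

(* An anti-automorphism of order dividing 2 (linear, reverses products,
   squares to the identity; bijectivity follows from the latter). *)
Definition is_involution (F : fieldType) (B : vectType F)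
    (mul : B -> B -> B) (conj : B -> B) : Prop :=
  [/\ forall (a : F) (x y : B), conj (a *: x + y) = a *: conj x + conj y,
      forall x y : B, conj (mul x y) = mul (conj y) (conj x)
    & forall x : B, conj (conj x) = x].

Definition involutive_algebra (F : fieldType) (B : vectType F)
    (mul : B -> B -> B) (one : B) : Prop :=
  exists conj : B -> B, is_involution mul conj /\
    forall a : B, inF1 one (a + conj a) /\ inF1 one (mul a (conj a)).

Definition ImB (F : fieldType) (B : vectType F)
    (mul : B -> B -> B) (one u : B) : bool :=
  (u == 0) || (~~ inF1 one u && inF1 one (mul u u)).

(* For u, v in Im B: uv = (u,v)1 + u x v with (u,v) in F, u x v in Im B. *)
Definition dotB (F : fieldType) (B : vectType F)
    (mul : B -> B -> B) (one u v : B) : F :=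
  epsilon (inhabits (0 : F)) (fun a : F => ImB mul one (mul u v - a *: one)).

Definition crossB (F : fieldType) (B : vectType F)
    (mul : B -> B -> B) (one u v : B) : B :=
  mul u v - dotB mul one u v *: one.

Definition basis_of_ImB (F : fieldType) (B : vectType F)
    (mul : B -> B -> B) (one u v : B) : Prop :=
  [/\ ImB mul one u, ImB mul one v, free [:: u; v]
    & forall w : B, ImB mul one w -> w \in <<[:: u; v]>>%VS].

(* Main.v *)
Require Import Defs.
From HB Require Import structures.
From mathcomp Require Import all_boot all_order all_algebra.
From mathcomp Require Import ring.
From Stdlib Require Import ClassicalEpsilon.
Import GRing.Theory.
Local Open Scope ring_scope.

Lemma span2P (F : fieldType) (B : vectType F) (a b u : B) :
  u \in <<[:: a; b]>>%VS -> exists k l : F, u = k *: a + l *: b.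
Proof.
rewrite span_cons span_seq1 => /memv_addP [p /vlineP [k ->] [q /vlineP [l ->] ->]].
by exists k, l.
Qed.

Lemma span3P (F : fieldType) (B : vectType F) (a b c u : B) :
  u \in <<[:: a; b; c]>>%VS -> exists k l m : F, u = k *: a + l *: b + m *: c.
Proof.
rewrite span_cons => /memv_addP [p /vlineP [k ->] [q /span2P [l [m ->]] ->]].
by exists k, l, m; rewrite addrA.
Qed.

Lemma span2_mem (F : fieldType) (B : vectType F) (a b : B) (k l : F) :
  k *: a + l *: b \in <<[:: a; b]>>%VS.
Proof. by rewrite span_cons span_seq1 memv_add // memvZ // memv_line. Qed.

Lemma free2 (F : fieldType) (B : vectType F) (a b : B) :
  b != 0 -> (forall k, a != k *: b) -> free [:: a; b].
Proof.
move=> hb ha; rewrite free_cons span_seq1 free_cons span_nil memv0 hb /=.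
apply/andP; split; last by rewrite /free span_nil dimv0.
apply/negP => /vlineP [k hk]; by move: (ha k); rewrite hk eqxx.
Qed.

Lemma free3 (F : fieldType) (B : vectType F) (a b c : B) :
  free [:: b; c] -> (forall k l, a != k *: b + l *: c) -> free [:: a; b; c].
Proof.
move=> hbc ha; rewrite free_cons hbc andbT; apply/negP => /span2P [k [l hk]].
by move: (ha k l); rewrite hk eqxx.
Qed.

Theorem lemma4p7 (F : fieldType) (B : vectType F)
    (mul : B -> B -> B) (one : B) :
  ~~ (2%N \in [pchar F]) ->
  is_unital_algebra mul one ->
  \dim (fullv : {vspace B}) = 3%N ->
  (exists x y : B, mul x y != mul y x) ->
  involutive_algebra mul one ->
  exists u v : B,
    [/\ basis_of_ImB mul one u v,
        crossB mul one u v = u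
      & dotB mul one u u = 0 \/ dotB mul one u v = 0].
Proof.
move=> h2 [mDl mDr m1] dim3 [x [y xy]] [cj [[cjL cjM cjK] cjF]].
have two0 : (2%:R : F) != 0 by apply: contra h2 => h; rewrite inE /= h.
set h : F := 2%:R^-1.
have hh : h + h = 1.
  by rewrite -mulr2n -mulr_natl mulfV.
have h0 : h != 0 by rewrite invr_eq0.
have mul0l z : mul 0 z = 0.
  have := mDl 1 0 0 z; rewrite !scale1r !addr0.
  by move/(congr1 (fun t => t - mul 0 z)); rewrite addrK subrr => <-.
have mul0r z : mul z 0 = 0.
  have := mDr 1 0 0 z; rewrite !scale1r !addr0.
  by move/(congr1 (fun t => t - mul z 0)); rewrite addrK subrr => <-.
have mulZl a u z : mul (a *: u) z = a *: mul u z.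
  by have := mDl a u 0 z; rewrite !addr0 mul0l addr0.
have mulZr a u z : mul z (a *: u) = a *: mul z u.
  by have := mDr a u 0 z; rewrite !addr0 mul0r addr0.
have mulDl u v z : mul (u + v) z = mul u z + mul v z.
  by have := mDl 1 u v z; rewrite !scale1r.
have mulDr u v z : mul z (u + v) = mul z u + mul z v.
  by have := mDr 1 u v z; rewrite !scale1r.
have mulNl u z : mul (- u) z = - mul u z by rewrite -scaleN1r mulZl scaleN1r.
have mulNr u z : mul z (- u) = - mul z u by rewrite -scaleN1r mulZr scaleN1r.
have mulBl u v z : mul (u - v) z = mul u z - mul v z by rewrite mulDl mulNl.
have mulBr u v z : mul z (u - v) = mul z u - mul z v by rewrite mulDr mulNr.
have cj0 : cj 0 = 0.
  have := cjL 1 0 0; rewrite !scale1r !addr0.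
  by move/(congr1 (fun t => t - cj 0)); rewrite addrK subrr => <-.
have cjZ a u : cj (a *: u) = a *: cj u by have := cjL a u 0; rewrite !addr0 cj0 addr0.
have cjD u v : cj (u + v) = cj u + cj v by have := cjL 1 u v; rewrite !scale1r.
have cjN u : cj (- u) = - cj u by rewrite -scaleN1r cjZ scaleN1r.
have cjB u v : cj (u - v) = cj u - cj v by rewrite cjD cjN.
have cj1 : cj one = one.
  have hr z : mul z (cj one) = z.
    by have := cjM one (cj z); rewrite (m1 (cj z)).1 !cjK.
  by rewrite -{1}((m1 (cj one)).1) hr.
have one0 : one != 0.
  apply/eqP => e; move: xy; rewrite -(m1 x).1 -(m1 y).1 e !mul0l eqxx //.
have lin0 k : k *: one = - (k *: one) -> k = 0.
  move/eqP; rewrite -subr_eq0 opprK -scalerDl scaler_eq0 (negbTE one0) orbF.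
  by rewrite -mulr2n -mulr_natr mulf_eq0 (negbTE two0) orbF => /eqP.
have ImBP z : ImB mul one z <-> cj z = - z.
  split.
    rewrite /ImB; case/orP => [/eqP -> | /andP [nz hz]]; first by rewrite cj0 oppr0.
    have [t ht] := vlineP _ _ (cjF z).1.
    have [m hm] := vlineP _ _ (cjF z).2.
    have [n hn] := vlineP _ _ hz.
    have ecj : cj z = t *: one - z by rewrite -ht addrC addKr.
    move: hm; rewrite ecj mulBr mulZr (m1 z).2 hn => hm.
    have e : t *: z = (m + n) *: one by rewrite scalerDl -hm subrK.
    have [t0|tn0] := eqVneq t 0; first by rewrite t0 scale0r sub0r.
    exfalso; move/negP: nz; apply; apply/vlineP; exists (t^-1 * (m + n)).
    by rewrite -scalerA -e scalerA mulVf // scale1r.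
  move=> hz; rewrite /ImB; have [//|nz] := eqVneq z 0; rewrite orFb.
  apply/andP; split.
    apply/negP => /vlineP [k hk]; move: hz; rewrite hk cjZ cj1 => /lin0 k0.
    by move: nz; rewrite hk k0 scale0r eqxx.
  have := (cjF z).2; rewrite hz mulNr => hm.
  by rewrite -(opprK (mul z z)) /inF1 memvN.
have Pcomb a b u v : cj u = - u -> cj v = - v -> cj (a *: u + b *: v) = - (a *: u + b *: v).
  by move=> hu hv; rewrite cjD !cjZ hu hv opprD !scalerN.
have cjmul u v : cj u = - u -> cj v = - v -> cj (mul u v) = mul v u.
  by move=> hu hv; rewrite cjM hu hv mulNl mulNr opprK.
have hsplit a b : a - h *: (a + b) = h *: (a - b).
  rewrite scalerBr scalerDr opprD addrA; congr (_ - _).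
  by rewrite -{1}(scale1r a) -hh scalerDl addrK.
have dotE u v : cj u = - u -> cj v = - v ->
    dotB mul one u v *: one = h *: (mul u v + mul v u).
  move=> hu hv.
  have [c hc] := vlineP _ _ (cjF (mul u v)).1.
  move: hc; rewrite cjmul // => hc.
  have ex : exists a : F, ImB mul one (mul u v - a *: one).
    exists (h * c); apply/ImBP; rewrite cjB cjmul // cjZ cj1.
    have -> : mul v u = c *: one - mul u v by rewrite -hc addrC addKr.
    have cE : c = h * c + h * c by rewrite -mulrDl hh mul1r.
    by rewrite opprB {1}cE scalerDl addrAC addrK.
  have := epsilon_spec (inhabits (0 : F)) _ ex; rewrite -/(dotB mul one u v).
  move/ImBP; rewrite cjB cjmul // cjZ cj1 => e.
  have -> : mul v u = - mul u v + (dotB mul one u v + dotB mul one u v) *: one.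
    move/(congr1 (fun t => t + dotB mul one u v *: one)): e; rewrite subrK => ->.
    by rewrite opprB scalerDl addrAC addrC.
  rewrite addrA subrr add0r scalerA; congr (_ *: _).
  by rewrite mulrDr -mulrDl hh mul1r.
have crossE u v : cj u = - u -> cj v = - v ->
    crossB mul one u v = h *: (mul u v - mul v u).
  by move=> hu hv; rewrite /crossB dotE // hsplit.
set cr := fun u v => h *: (mul u v - mul v u).
have crZl a u v : cr (a *: u) v = a *: cr u v.
  by rewrite /cr mulZl mulZr -scalerBr !scalerA mulrC.
have crZr a u v : cr u (a *: v) = a *: cr u v.
  by rewrite /cr mulZl mulZr -scalerBr !scalerA mulrC.
have crDl u v z : cr (u + v) z = cr u z + cr v z.
  rewrite /cr mulDl mulDr -scalerDr; congr (_ *: _).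
  by rewrite opprD addrACA.
have crDr u v z : cr z (u + v) = cr z u + cr z v.
  rewrite /cr mulDl mulDr -scalerDr; congr (_ *: _).
  by rewrite opprD addrACA.
have crxx u : cr u u = 0 by rewrite /cr subrr scaler0.
have cranti u v : cr v u = - cr u v by rewrite /cr -scalerN opprB.
have m1l z : mul one z = z := (m1 z).1.
have m1r z : mul z one = z := (m1 z).2.
have Pcr u v : cj u = - u -> cj v = - v -> cj (cr u v) = - cr u v.
  by move=> hu hv; rewrite /cr cjZ cjB !cjmul // -scalerN opprB.
have PZ a u : cj u = - u -> cj (a *: u) = - (a *: u) by move=> hu; rewrite cjZ hu scalerN.
have PD u v : cj u = - u -> cj v = - v -> cj (u + v) = - (u + v).
  by move=> hu hv; rewrite cjD hu hv opprD.
have sinj a b : a *: one = b *: one -> a = b.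
  move/eqP; rewrite -subr_eq0 -scalerBl scaler_eq0 (negbTE one0) orbF subr_eq0.
  by move/eqP.
have dec a : exists x0 c, cj x0 = - x0 /\ a = x0 + c *: one.
  have [t ht] := vlineP _ _ (cjF a).1.
  exists (a - (h * t) *: one), (h * t); split; last by rewrite subrK.
  rewrite cjB cjZ cj1.
  have -> : cj a = t *: one - a by rewrite -ht addrC addKr.
  have tE : t = h * t + h * t by rewrite -mulrDl hh mul1r.
  by rewrite opprB {1}tE scalerDl addrAC addrK.
have [x0 [c [Px ex]]] := dec x.
have [y0 [d [Py ey]]] := dec y.
subst x y.
have wn0 : cr x0 y0 != 0.
  apply: contra xy => w0.
  have e : mul x0 y0 = mul y0 x0.
    by move: w0; rewrite /cr scaler_eq0 (negbTE h0) subr_eq0 => /eqP.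
  apply/eqP; rewrite !mulDl !mulDr !mulZl !mulZr !m1l !m1r e !scalerA mulrC.
  by rewrite -!addrA; congr (_ + _); rewrite addrCA.
have fr2 : free [:: x0; y0].
  apply: free2.
    apply/eqP => y00; move: wn0; by rewrite y00 /cr mul0l mul0r subrr scaler0 eqxx.
  move=> k; apply/eqP => e; move: wn0; by rewrite e crZl crxx scaler0 eqxx.
have fr3 : free [:: one; x0; y0].
  apply: free3 => // k l; apply/eqP => e.
  have := Pcomb k l x0 y0 Px Py; rewrite -e cj1 => e1.
  by move: one0; rewrite -(scale1r one) (lin0 1) ?scale1r // scale0r eqxx.
have full : <<[:: one; x0; y0]>>%VS = fullv.
  by apply/eqP; rewrite eqEdim subvf dim3 (eqP fr3).
have V0sub z : cj z = - z -> exists b e, z = b *: x0 + e *: y0.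
  move=> Pz; have : z \in <<[:: one; x0; y0]>>%VS by rewrite full memvf.
  case/span3P => a [b [e ez]]; exists b, e.
  have ez' : z = a *: one + (b *: x0 + e *: y0) by rewrite addrA.
  have Pr := Pcomb b e x0 y0 Px Py.
  move: Pz; rewrite ez' {1}cjD cjZ cj1 Pr.
  move/(congr1 (fun t => t + (b *: x0 + e *: y0))); rewrite subrK opprD subrK => /lin0 a0.
  by rewrite a0 scale0r add0r.
have [w [Pw wn0' crx]] : exists w, [/\ cj w = - w, w != 0 & cr x0 y0 = w].
  by exists (cr x0 y0); split => //; apply: Pcr.
have [al [be ew]] := V0sub _ Pw.
have crwy : cr w y0 = al *: w.
  by rewrite {1}ew crDl !crZl crxx scaler0 addr0 crx.
have crwx : cr w x0 = - (be *: w).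
  by rewrite {1}ew crDl !crZl crxx scaler0 add0r cranti crx scalerN.
have [v1 [Pv1 crv1]] : exists v1, cj v1 = - v1 /\ cr w v1 = w.
  have [al0|aln0] := eqVneq al 0.
    have ben0 : be != 0.
      by apply/eqP => be0; move: wn0'; rewrite ew al0 be0 !scale0r addr0 eqxx.
    exists ((- be^-1) *: x0); split; first exact: PZ.
    by rewrite crZr crwx scalerN scaleNr opprK scalerA mulVf // scale1r.
  exists (al^-1 *: y0); split; first exact: PZ.
  by rewrite crZr crwy scalerA mulVf // scale1r.
pose lam := if dotB mul one w w == 0 then 0 else - dotB mul one w v1 / dotB mul one w w.
pose v := v1 + lam *: w.
have Pv : cj v = - v by apply: PD => //; apply: PZ.
have crwv : cr w v = w by rewrite /v crDr crZr crxx scaler0 addr0.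
have dE : dotB mul one w v = dotB mul one w v1 + lam * dotB mul one w w.
  apply: sinj; rewrite scalerDl -scalerA !dotE // /v mulDr mulDl !mulZr !mulZl.
  rewrite addrACA scalerDr. congr (_ + _).
  by rewrite -scalerDr !scalerA mulrC.
exists w, v; split.
- split; [exact/ImBP | exact/ImBP | |].
    apply: free2.
      apply/eqP => v0; move: wn0'; rewrite -{1}crwv v0 /cr mul0l mul0r subrr scaler0 eqxx //.
    move=> k; apply/eqP => e; move: wn0'; rewrite -{1}crwv {1}e crZl crxx scaler0 eqxx //.
  have frwv : free [:: w; v].
    apply: free2.
      apply/eqP => v0; move: wn0'; rewrite -{1}crwv v0 /cr mul0l mul0r subrr scaler0 eqxx //.
    move=> k; apply/eqP => e; move: wn0'; rewrite -{1}crwv {1}e crZl crxx scaler0 eqxx //.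
  have sp : (<<[:: w; v]>> == <<[:: x0; y0]>>)%VS.
    rewrite eqEdim (eqP fr2) (eqP frwv) leqnn andbT.
    apply/span_subvP => z; rewrite !inE => /orP [/eqP -> | /eqP ->].
      by have [b [e ->]] := V0sub _ Pw; apply: span2_mem.
    by have [b [e ->]] := V0sub _ Pv; apply: span2_mem.
  move=> z /ImBP Pz; rewrite (eqP sp).
  by have [b [e ->]] := V0sub _ Pz; apply: span2_mem.
- by rewrite crossE //; exact: crwv.
- have [d0|dn0] := eqVneq (dotB mul one w w) 0; first by left.
  right; rewrite dE /lam (negbTE dn0); field.
  done.

Qed.
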